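(* For every integer $n$ with $1\le n\le 10$, \[ s(P_n)=\max_{0\le r\le n}|Q^{(r)}(P_n)|. \]
   Context: $Q(P_n)$ is the family of subsets of $[n]=\{1,\dots,n\}$ containing no two consecutive integers, and $Q^{(r)}(P_n)$ its members of size $r$. $s(P_n)$ is the maximum size of an antichain (a subfamily in which no member is a proper subset of another) in $Q(P_n)$. *)

(* Defs.v *)
From mathcomp Require Import all_boot.
Set Implicit Arguments. Unset Strict Implicit. Unset Printing Implicit Defensive.

(* [n] = {1..n} is represented by 'I_n, element i : 'I_n standing for i+1. *)

Definition sparse (n : nat) (A : {set 'I_n}) : bool :=
  [forall i : 'I_n, forall j : 'I_n, (i \in A) && (j \in A) ==> (val j != (val i).+1)].

Definition QP (n : nat) : {set {set 'I_n}} := [set A | sparse A].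

Definition QPr (n r : nat) : {set {set 'I_n}} := [set A in QP n | #|A| == r].

Definition antichainQ (n : nat) (F : {set {set 'I_n}}) : Prop :=
  F \subset QP n /\ forall A B, A \in F -> B \in F -> ~~ (A \proper B).

Definition is_sP (n m : nat) : Prop :=
  (exists F : {set {set 'I_n}}, antichainQ F /\ #|F| = m) /\ (forall F : {set {set 'I_n}}, antichainQ F -> #|F| <= m).

(* Main.v *)
Require Import Defs.
From mathcomp Require Import all_boot.
Set Implicit Arguments. Unset Strict Implicit. Unset Printing Implicit Defensive.

Fixpoint allvecs (n : nat) : seq (seq bool) :=
  if n is n'.+1 then [seq b :: s | b <- [:: true; false], s <- allvecs n'] else [:: [::]].

Definition sparseb (s : seq bool) :=
  all (fun k => ~~ (nth false s k && nth false s k.+1)) (iota 0 (size s)).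
Definition subb (s t : seq bool) :=
  all (fun k => nth false s k ==> nth false t k) (iota 0 (size s)).

Definition vec n (A : {set 'I_n}) : seq bool := [seq i \in A | i <- enum 'I_n].
Definition decode n (s : seq bool) : {set 'I_n} := [set i : 'I_n | nth false s i].

Lemma size_vec n (A : {set 'I_n}) : size (vec A) = n.
Proof. by rewrite size_map size_enum_ord. Qed.

Lemma nth_vec n (A : {set 'I_n}) (i : 'I_n) : nth false (vec A) i = (i \in A).
Proof. by rewrite (nth_map i) ?size_enum_ord // nth_ord_enum. Qed.

Lemma allvecsP n s : size s = n -> s \in allvecs n.
Proof.
elim: n s => [|n IH] [|b s] //= [Hs].
rewrite mem_cat; case: b.
  by apply/orP; left; rewrite map_f ?IH.
by apply/orP; right; rewrite cats0 map_f ?IH.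
Qed.

Lemma vec_inj n (A B : {set 'I_n}) : vec A = vec B -> A = B.
Proof. by move=> E; apply/setP => i; rewrite -!nth_vec E. Qed.

Lemma sparse_vec n (A : {set 'I_n}) : sparse A -> sparseb (vec A).
Proof.
move=> /forallP H; apply/allP => k; rewrite mem_iota size_vec /= => Hk.
have Hk' : k < n by [].
case: (ltnP k.+1 n) => Hk1.
  rewrite (nth_vec A (Ordinal Hk')) (nth_vec A (Ordinal Hk1)).
  apply/negP => Hab.
  by move: (forallP (H (Ordinal Hk')) (Ordinal Hk1)); rewrite Hab /= eqxx.
by rewrite (nth_default _ (_ : size (vec A) <= k.+1)) ?andbF // size_vec.
Qed.

Lemma subb_vec n (A B : {set 'I_n}) : subb (vec A) (vec B) -> A \subset B.
Proof.
move=> /allP H; apply/subsetP => i Hi.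
have := H i; rewrite mem_iota size_vec /= ltn_ord !nth_vec Hi /=.
by move=> /(_ isT).
Qed.

Lemma sparse_decode n s : size s = n -> sparseb s -> sparse (decode n s).
Proof.
move=> Hs /allP H; apply/forallP => i; apply/forallP => j; apply/implyP.
rewrite !inE => /andP [Hi Hj]; apply/eqP => E.
have := H i; rewrite mem_iota Hs /= ltn_ord Hi -E Hj /=.
by move=> /(_ isT).
Qed.

Lemma vec_decode n s : size s = n -> vec (decode n s) = s.
Proof.
move=> Hs; apply: (@eq_from_nth _ false); first by rewrite size_vec.
move=> k; rewrite size_vec => Hk.
by rewrite (nth_vec _ (Ordinal Hk)) inE.
Qed.

Lemma card_decode n s : size s = n -> #|decode n s| = count id s.
Proof.
move=> Hs; rewrite -{2}(vec_decode Hs) /vec count_map cardE size_filter.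
by rewrite enumT; apply: eq_count => i; rewrite /= !unfold_in.
Qed.

Section Main.
Variables (n : nat) (cs : seq (seq (seq bool))) (r0 : nat).
Let L := [seq s <- allvecs n | sparseb s && (count id s == r0)].
Hypothesis C1 : all (fun s => sparseb s ==> has (fun c => s \in c) cs) (allvecs n).
Hypothesis C2 : all (fun c => all (fun x => all (fun y => (x == y) || subb x y || subb y x) c) c) cs.
Hypothesis C3 : uniq L && (size cs <= size L).
Hypothesis C4 : all (fun s => size s == n) (allvecs n).
Hypothesis Hr0 : r0 < n.+1.

Lemma antichain_bound (F : {set {set 'I_n}}) : antichainQ F -> #|F| <= size cs.
Proof.
move=> [HF Hac].
pose g (A : {set 'I_n}) := find (fun c => vec A \in c) cs.
have gin A : A \in F -> g A < size cs.
  move=> HA; rewrite -has_find.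
  have := allP C1 (vec A) (allvecsP (size_vec A)).
  have : A \in QP n by apply: (subsetP HF).
  by rewrite inE => /sparse_vec -> /=.
pose h (A : {set 'I_n}) : 'I_(size cs).+1 := inord (g A).
have : {in F &, injective h}.
  move=> A B HA HB /(congr1 val).
  have gA := ltnW (gin A HA); have gB := ltnW (gin B HB).
  rewrite /= !inordK ?ltnS // => E.
  have hA := gin A HA; have hB := gin B HB.
  set c := nth [::] cs (g A).
  have cA : vec A \in c by rewrite /c; apply: (@nth_find _ [::] (fun c => vec A \in c)); rewrite has_find.
  have cB : vec B \in c by rewrite /c E; apply: (@nth_find _ [::] (fun c => vec B \in c)); rewrite has_find.
  have := allP (allP (allP C2 c (mem_nth _ hA)) _ cA) _ cB.
  case/orP => [/orP [/eqP/vec_inj // | H] | H].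
    have Hs := subb_vec H; case: (eqVneq A B) => // ne.
    by have := Hac A B HA HB; rewrite properEneq ne Hs.
  have Hs := subb_vec H; case: (eqVneq B A) => // ne.
  by have := Hac B A HB HA; rewrite properEneq ne Hs.
move/card_in_imset => <-.
apply: (@leq_trans #|[set~ (ord_max : 'I_(size cs).+1)]|); last by rewrite cardsC1 card_ord.
apply: subset_leq_card; apply/subsetP => x /imsetP [A HA ->].
rewrite !inE; apply/eqP => /(congr1 val); rewrite /= inordK; last by rewrite ltnS ltnW // gin.
by move=> E; have := gin A HA; rewrite E ltnn.
Qed.

Lemma level_antichain r : antichainQ (QPr n r).
Proof.
split; first by apply/subsetP => A; rewrite inE => /andP [].
move=> A B; rewrite !inE => /andP [_ /eqP HA] /andP [_ /eqP HB].
apply/negP => /proper_card; by rewrite HA HB ltnn.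
Qed.

Lemma level_lower : size cs <= #|QPr n r0|.
Proof.
case/andP: C3 => uL Hle; apply: (leq_trans Hle).
have sL s : s \in L -> size s = n.
  by rewrite mem_filter => /andP [_ /(allP C4) /eqP].
have inj : {in L &, injective (decode n)}.
  by move=> s t Hs Ht E; rewrite -(vec_decode (sL s Hs)) -(vec_decode (sL t Ht)) E.
rewrite -(size_map (decode n)) -(card_uniqP _); last by rewrite map_inj_in_uniq.
apply: subset_leq_card; apply/subsetP => A /mapP [s Hs ->].
move: (Hs); rewrite mem_filter => /andP [/andP [sp /eqP cnt] _].
by rewrite !inE sparse_decode ?sL //= card_decode ?sL // cnt.
Qed.

Lemma main_gen : is_sP n (\max_(r < n.+1) #|QPr n r|).
Proof.
have E : \max_(r < n.+1) #|QPr n r| = size cs.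
  apply/eqP; rewrite eqn_leq; apply/andP; split.
    by apply/bigmax_leqP => r _; apply: antichain_bound; apply: level_antichain.
  apply: (leq_trans level_lower).
  by apply: (leq_bigmax (Ordinal Hr0)).
rewrite E; split; last by apply: antichain_bound.
exists (QPr n r0); split; first exact: level_antichain.
apply/eqP; rewrite eqn_leq level_lower andbT.
exact: antichain_bound (level_antichain r0).
Qed.
End Main.
Definition cs1 : seq (seq (seq bool)) := [:: [::[::false];[::true]]].
Definition r1 := 0.
Definition cs2 : seq (seq (seq bool)) := [:: [::[::false;false];[::true;false]];[::[::false;true]]].
Definition r2 := 1.
Definition cs3 : seq (seq (seq bool)) := [:: [::[::false;false;false];[::true;false;false];[::true;false;true]];[::[::false;true;false]];[::[::false;false;true]]].
Definition r3 := 1.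
Definition cs4 : seq (seq (seq bool)) := [:: [::[::false;false;false;false];[::true;false;false;false];[::true;false;false;true]];[::[::false;true;false;false];[::false;true;false;true]];[::[::false;false;true;false];[::true;false;true;false]];[::[::false;false;false;true]]].
Definition r4 := 1.
Definition cs5 : seq (seq (seq bool)) := [:: [::[::false;false;false;false;false];[::true;false;false;false;false];[::true;false;true;false;false];[::true;false;true;false;true]];[::[::false;true;false;false;false];[::false;true;false;true;false]];[::[::false;false;true;false;false];[::false;false;true;false;true]];[::[::false;false;false;true;false];[::true;false;false;true;false]];[::[::false;false;false;false;true];[::true;false;false;false;true]];[::[::false;true;false;false;true]]].
Definition r5 := 2.
Definition cs6 : seq (seq (seq bool)) := [:: [::[::false;false;false;false;false;false];[::true;false;false;false;false;false];[::true;false;true;false;false;false];[::true;false;true;false;false;true]];[::[::false;true;false;false;false;false];[::false;true;false;true;false;false];[::false;true;false;true;false;true]];[::[::false;false;true;false;false;false];[::false;false;true;false;true;false]];[::[::false;false;false;true;false;false];[::true;false;false;true;false;false];[::true;false;false;true;false;true]];[::[::false;false;false;false;true;false];[::true;false;false;false;true;false];[::true;false;true;false;true;false]];[::[::false;true;false;false;true;false]];[::[::false;false;false;false;false;true];[::true;false;false;false;false;true]];[::[::false;true;false;false;false;true]];[::[::false;false;true;false;false;true]];[::[::false;false;false;true;false;true]]].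
Definition r6 := 2.
Definition cs7 : seq (seq (seq bool)) := [:: [::[::false;false;false;false;false;false;false];[::true;false;false;false;false;false;false];[::true;false;true;false;false;false;false];[::true;false;true;false;true;false;false];[::true;false;true;false;true;false;true]];[::[::false;true;false;false;false;false;false];[::false;true;false;true;false;false;false];[::false;true;false;true;false;false;true]];[::[::false;false;true;false;false;false;false];[::false;false;true;false;true;false;false];[::false;false;true;false;true;false;true]];[::[::false;false;false;true;false;false;false];[::true;false;false;true;false;false;false];[::true;false;false;true;false;false;true]];[::[::false;false;false;false;true;false;false];[::true;false;false;false;true;false;false];[::true;false;false;false;true;false;true]];[::[::false;true;false;false;true;false;false];[::false;true;false;false;true;false;true]];[::[::false;false;false;false;false;true;false];[::true;false;false;false;false;true;false];[::true;false;false;true;false;true;false]];[::[::false;true;false;false;false;true;false];[::false;true;false;true;false;true;false]];[::[::false;false;true;false;false;true;false];[::true;false;true;false;false;true;false]];[::[::false;false;false;true;false;true;false]];[::[::false;false;false;false;false;false;true];[::true;false;false;false;false;false;true];[::true;false;true;false;false;false;true]];[::[::false;true;false;false;false;false;true]];[::[::false;false;true;false;false;false;true]];[::[::false;false;false;true;false;false;true]];[::[::false;false;false;false;true;false;true]]].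
Definition r7 := 2.
Definition cs8 : seq (seq (seq bool)) := [:: [::[::false;false;false;false;false;false;false;false];[::true;false;false;false;false;false;false;false];[::true;false;true;false;false;false;false;false];[::true;false;true;false;false;true;false;false];[::true;false;true;false;false;true;false;true]];[::[::false;true;false;false;false;false;false;false];[::false;true;false;true;false;false;false;false];[::false;true;false;true;false;true;false;false];[::false;true;false;true;false;true;false;true]];[::[::false;false;true;false;false;false;false;false];[::false;false;true;false;true;false;false;false];[::true;false;true;false;true;false;false;false];[::true;false;true;false;true;false;false;true]];[::[::false;false;false;true;false;false;false;false];[::true;false;false;true;false;false;false;false];[::true;false;false;true;false;true;false;false];[::true;false;false;true;false;true;false;true]];[::[::false;false;false;false;true;false;false;false];[::true;false;false;false;true;false;false;false];[::true;false;false;false;true;false;true;false]];[::[::false;true;false;false;true;false;false;false];[::false;true;false;false;true;false;false;true]];[::[::false;false;false;false;false;true;false;false];[::true;false;false;false;false;true;false;false];[::true;false;false;false;false;true;false;true]];[::[::false;true;false;false;false;true;false;false];[::false;true;false;false;false;true;false;true]];[::[::false;false;true;false;false;true;false;false];[::false;false;true;false;false;true;false;true]];[::[::false;false;false;true;false;true;false;false];[::false;false;false;true;false;true;false;true]];[::[::false;false;false;false;false;false;true;false];[::true;false;false;false;false;false;true;false];[::true;false;true;false;false;false;true;false];[::true;false;true;false;true;false;true;false]];[::[::false;true;false;false;false;false;true;false];[::false;true;false;true;false;false;true;false]];[::[::false;false;true;false;false;false;true;false];[::false;false;true;false;true;false;true;false]];[::[::false;false;false;true;false;false;true;false];[::t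rue;false;false;true;false;false;true;false]];[::[::false;false;false;false;true;false;true;false];[::false;true;false;false;true;false;true;false]];[::[::false;false;false;false;false;false;false;true];[::true;false;false;false;false;false;false;true];[::true;false;true;false;false;false;false;true]];[::[::false;true;false;false;false;false;false;true];[::false;true;false;true;false;false;false;true]];[::[::false;false;true;false;false;false;false;true];[::false;false;true;false;true;false;false;true]];[::[::false;false;false;true;false;false;false;true];[::true;false;false;true;false;false;false;true]];[::[::false;false;false;false;true;false;false;true];[::true;false;false;false;true;false;false;true]];[::[::false;false;false;false;false;true;false;true]]].
Definition r8 := 2.
Definition cs9 : seq (seq (seq bool)) := [:: [::[::false;false;false;false;false;false;false;false;false];[::true;false;false;false;false;false;false;false;false];[::true;false;true;false;false;false;false;false;false];[::true;false;true;false;false;true;false;false;false];[::true;false;true;false;false;true;false;false;true]];[::[::false;true;false;false;false;false;false;false;false];[::false;true;false;true;false;false;false;false;false];[::false;true;false;true;false;true;false;false;false];[::false;true;false;true;false;true;false;false;true]];[::[::false;false;true;false;false;false;false;false;false];[::false;false;true;false;true;false;false;false;false];[::false;false;true;false;true;false;false;true;false]];[::[::false;false;false;true;false;false;false;false;false];[::true;false;false;true;false;false;false;false;false];[::true;false;false;true;false;false;true;false;false];[::true;false;false;true;false;false;true;false;true]];[::[::false;false;false;false;true;false;false;false;false];[::true;false;false;false;true;false;false;false;false];[::true;false;true;false;true;false;false;false;false];[::true;false;true;false;true;false;true;false;false];[::true;false;true;false;true;false;true;false;true]];[::[::false;true;false;false;true;false;false;false;false];[::false;true;false;false;true;false;t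rue;false;false];[::false;true;false;false;true;false;true;false;true]];[::[::false;false;false;false;false;true;false;false;false];[::true;false;false;false;false;true;false;false;false];[::true;false;false;true;false;true;false;false;false];[::true;false;false;true;false;true;false;false;true]];[::[::false;true;false;false;false;true;false;false;false];[::false;true;false;false;false;true;false;true;false]];[::[::false;false;true;false;false;true;false;false;false];[::false;false;true;false;false;true;false;true;false]];[::[::false;false;false;true;false;true;false;false;false];[::false;false;false;true;false;true;false;true;false]];[::[::false;false;false;false;false;false;true;false;false];[::true;false;false;false;false;false;true;false;false];[::true;false;true;false;false;false;true;false;false];[::true;false;true;false;false;false;true;false;true]];[::[::false;true;false;false;false;false;true;false;false];[::false;true;false;true;false;false;true;false;false];[::false;true;false;true;false;false;true;false;true]];[::[::false;false;true;false;false;false;true;false;false];[::false;false;true;false;true;false;true;false;false];[::false;false;true;false;true;false;true;false;true]];[::[::false;false;false;true;false;false;true;false;false];[::false;false;false;true;false;false;true;false;true]];[::[::false;false;false;false;true;false;true;false;false];[::true;false;false;false;true;false;true;false;false];[::true;false;false;false;true;false;true;false;true]];[::[::false;false;false;false;false;false;false;true;false];[::true;false;false;false;false;false;false;true;false];[::true;false;false;true;false;false;false;true;false];[::true;false;false;true;false;true;false;true;false]];[::[::false;true;false;false;false;false;false;true;false];[::false;true;false;false;true;false;false;true;false]];[::[::false;false;true;false;false;false;false;true;false];[::true;false;true;false;false;false;false;true;false];[::true;false;true;false;false;true;false;true;false]];[::[::false;false;false;true;false;false;false;true;false];[::false;true;false;true;false;false;false;true;false];[::false;true;false;true;false;tr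ue;false;true;false]];[::[::false;false;false;false;true;false;false;true;false];[::true;false;false;false;true;false;false;true;false];[::true;false;true;false;true;false;false;true;false]];[::[::false;false;false;false;false;true;false;true;false];[::true;false;false;false;false;true;false;true;false]];[::[::false;false;false;false;false;false;false;false;true];[::true;false;false;false;false;false;false;false;true];[::true;false;true;false;false;false;false;false;true];[::true;false;true;false;true;false;false;false;true]];[::[::false;true;false;false;false;false;false;false;true];[::false;true;false;true;false;false;false;false;true]];[::[::false;false;true;false;false;false;false;false;true];[::false;false;true;false;true;false;false;false;true]];[::[::false;false;false;true;false;false;false;false;true];[::true;false;false;true;false;false;false;false;true]];[::[::false;false;false;false;true;false;false;false;true];[::true;false;false;false;true;false;false;false;true]];[::[::false;true;false;false;true;false;false;false;true]];[::[::false;false;false;false;false;true;false;false;true];[::true;false;false;false;false;true;false;false;true]];[::[::false;true;false;false;false;true;false;false;true]];[::[::false;false;true;false;false;true;false;false;true]];[::[::false;false;false;true;false;true;false;false;true]];[::[::false;false;false;false;false;false;true;false;true];[::true;false;false;false;false;false;true;false;true]];[::[::false;true;false;false;false;false;true;false;true]];[::[::false;false;true;false;false;false;true;false;true]];[::[::false;false;false;false;true;false;true;false;true]]].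
Definition r9 := 3.
Definition cs10 : seq (seq (seq bool)) := [:: [::[::false;false;false;false;false;false;false;false;false;false];[::true;false;false;false;false;false;false;false;false;false];[::true;false;true;false;false;false;false;false;false;false];[::true;false;true;false;false;true;false;false;false;false];[::true;false;true;false;false;true;false;false;false;true]];[::[::false;true;false;false;false;false;false;false;false;false];[::false;true;false;true;false;false;false;false;false;false];[::false;true;false;true;false;true;false;false;false;false];[::false;true;false;true;false;true;false;true;false;false];[::false;true;false;true;false;true;false;true;false;true]];[::[::false;false;true;false;false;false;false;false;false;false];[::false;false;true;false;true;false;false;false;false;false];[::false;false;true;false;true;false;false;true;false;false];[::false;false;true;false;true;false;false;true;false;true]];[::[::false;false;false;true;false;false;false;false;false;false];[::true;false;false;true;false;false;false;false;false;false];[::true;false;false;true;false;false;true;false;false;false];[::true;false;false;true;false;false;true;false;false;true]];[::[::false;false;false;false;true;false;false;false;false;false];[::true;false;false;false;true;false;false;false;false;false];[::true;false;true;false;true;false;false;false;false;false];[::true;false;true;false;true;false;false;true;false;false];[::true;false;true;false;true;false;false;true;false;true]];[::[::false;true;false;false;true;false;false;false;false;false];[::false;true;false;false;true;false;true;false;false;false];[::false;true;false;false;true;false;true;false;false;true]];[::[::false;false;false;false;false;true;false;false;false;false];[::true;false;false;false;false;true;false;false;false;false];[::true;false;false;true;false;true;false;false;false;false];[::true;false;false;true;false;true;false;true;false;false];[::true;false;false;true;false;true;false;true;false;true]];[::[::false;true;false;false;false;true;false;false;false;false];[::false;true;false;false;false;true;false;true;false;false];[::false;true;false;false;false;true;f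alse;true;false;true]];[::[::false;false;true;false;false;true;false;false;false;false];[::false;false;true;false;false;true;false;true;false;false];[::false;false;true;false;false;true;false;true;false;true]];[::[::false;false;false;true;false;true;false;false;false;false];[::false;false;false;true;false;true;false;true;false;false];[::false;false;false;true;false;true;false;true;false;true]];[::[::false;false;false;false;false;false;true;false;false;false];[::true;false;false;false;false;false;true;false;false;false];[::true;false;true;false;false;false;true;false;false;false];[::true;false;true;false;false;false;true;false;false;true]];[::[::false;true;false;false;false;false;true;false;false;false];[::false;true;false;true;false;false;true;false;false;false];[::false;true;false;true;false;false;true;false;false;true]];[::[::false;false;true;false;false;false;true;false;false;false];[::false;false;true;false;true;false;true;false;false;false];[::false;false;true;false;true;false;true;false;false;true]];[::[::false;false;false;true;false;false;true;false;false;false];[::false;false;false;true;false;false;true;false;true;false]];[::[::false;false;false;false;true;false;true;false;false;false];[::true;false;false;false;true;false;true;false;false;false];[::true;false;true;false;true;false;true;false;false;false];[::true;false;true;false;true;false;true;false;false;true]];[::[::false;false;false;false;false;false;false;true;false;false];[::true;false;false;false;false;false;false;true;false;false];[::true;false;false;true;false;false;false;true;false;false];[::true;false;false;true;false;false;false;true;false;true]];[::[::false;true;false;false;false;false;false;true;false;false];[::false;true;false;false;true;false;false;true;false;false];[::false;true;false;false;true;false;false;true;false;true]];[::[::false;false;true;false;false;false;false;true;false;false];[::true;false;true;false;false;false;false;true;false;false];[::true;false;true;false;false;true;false;true;false;false];[::true;false;true;false;false;true;false;true;false;true]];[::[::false;false;false;true;false;false;false;true;false;false];[::false;true;false;true;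false;false;false;true;false;false];[::false;true;false;true;false;false;false;true;false;true]];[::[::false;false;false;false;true;false;false;true;false;false];[::true;false;false;false;true;false;false;true;false;false];[::true;false;false;false;true;false;false;true;false;true]];[::[::false;false;false;false;false;true;false;true;false;false];[::true;false;false;false;false;true;false;true;false;false];[::true;false;false;false;false;true;false;true;false;true]];[::[::false;false;false;false;false;false;false;false;true;false];[::true;false;false;false;false;false;false;false;true;false];[::true;false;true;false;false;false;false;false;true;false];[::true;false;true;false;true;false;false;false;true;false];[::true;false;true;false;true;false;true;false;true;false]];[::[::false;true;false;false;false;false;false;false;true;false];[::false;true;false;true;false;false;false;false;true;false];[::false;true;false;true;false;false;true;false;true;false]];[::[::false;false;true;false;false;false;false;false;true;false];[::false;false;true;false;true;false;false;false;true;false];[::false;false;true;false;true;false;true;false;true;false]];[::[::false;false;false;true;false;false;false;false;true;false];[::true;false;false;true;false;false;false;false;true;false];[::true;false;false;true;false;false;true;false;true;false]];[::[::false;false;false;false;true;false;false;false;true;false];[::true;false;false;false;true;false;false;false;true;false];[::true;false;false;false;true;false;true;false;true;false]];[::[::false;true;false;false;true;false;false;false;true;false];[::false;true;false;false;true;false;true;false;true;false]];[::[::false;false;false;false;false;true;false;false;true;false];[::true;false;false;false;false;true;false;false;true;false];[::true;false;false;true;false;true;false;false;true;false]];[::[::false;true;false;false;false;true;false;false;true;false];[::false;true;false;true;false;true;false;false;true;false]];[::[::false;false;true;false;false;true;false;false;true;false];[::true;false;true;false;false;true;false;false;true;false]];[::[::false;false;false;true;false;true;false;false;true;false]];[::[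::false;false;false;false;false;false;true;false;true;false];[::true;false;false;false;false;false;true;false;true;false];[::true;false;true;false;false;false;true;false;true;false]];[::[::false;true;false;false;false;false;true;false;true;false]];[::[::false;false;true;false;false;false;true;false;true;false]];[::[::false;false;false;false;true;false;true;false;true;false]];[::[::false;false;false;false;false;false;false;false;false;true];[::true;false;false;false;false;false;false;false;false;true];[::true;false;true;false;false;false;false;false;false;true];[::true;false;true;false;false;false;false;true;false;true]];[::[::false;true;false;false;false;false;false;false;false;true];[::false;true;false;true;false;false;false;false;false;true];[::false;true;false;true;false;true;false;false;false;true]];[::[::false;false;true;false;false;false;false;false;false;true];[::false;false;true;false;true;false;false;false;false;true];[::true;false;true;false;true;false;false;false;false;true]];[::[::false;false;false;true;false;false;false;false;false;true];[::true;false;false;true;false;false;false;false;false;true];[::true;false;false;true;false;true;false;false;false;true]];[::[::false;false;false;false;true;false;false;false;false;true];[::true;false;false;false;true;false;false;false;false;true];[::true;false;false;false;true;false;true;false;false;true]];[::[::false;true;false;false;true;false;false;false;false;true]];[::[::false;false;false;false;false;true;false;false;false;true];[::true;false;false;false;false;true;false;false;false;true]];[::[::false;true;false;false;false;true;false;false;false;true]];[::[::false;false;true;false;false;true;false;false;false;true]];[::[::false;false;false;true;false;true;false;false;false;true]];[::[::false;false;false;false;false;false;true;false;false;true];[::true;false;false;false;false;false;true;false;false;true]];[::[::false;true;false;false;false;false;true;false;false;true]];[::[::false;false;true;false;false;false;true;false;false;true]];[::[::false;false;false;true;false;false;true;false;false;true]];[::[::false;false;false;false;true;false;true;false;false;t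rue]];[::[::false;false;false;false;false;false;false;true;false;true];[::true;false;false;false;false;false;false;true;false;true]];[::[::false;true;false;false;false;false;false;true;false;true]];[::[::false;false;true;false;false;false;false;true;false;true]];[::[::false;false;false;true;false;false;false;true;false;true]];[::[::false;false;false;false;true;false;false;true;false;true]];[::[::false;false;false;false;false;true;false;true;false;true]]].
Definition r10 := 3.
Lemma main1 : is_sP 1 (\max_(r < 1.+1) #|QPr 1 r|).
Proof. by apply: (@main_gen 1 cs1 r1); vm_compute. Qed.
Lemma main2 : is_sP 2 (\max_(r < 2.+1) #|QPr 2 r|).
Proof. by apply: (@main_gen 2 cs2 r2); vm_compute. Qed.
Lemma main3 : is_sP 3 (\max_(r < 3.+1) #|QPr 3 r|).
Proof. by apply: (@main_gen 3 cs3 r3); vm_compute. Qed.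
Lemma main4 : is_sP 4 (\max_(r < 4.+1) #|QPr 4 r|).
Proof. by apply: (@main_gen 4 cs4 r4); vm_compute. Qed.
Lemma main5 : is_sP 5 (\max_(r < 5.+1) #|QPr 5 r|).
Proof. by apply: (@main_gen 5 cs5 r5); vm_compute. Qed.
Lemma main6 : is_sP 6 (\max_(r < 6.+1) #|QPr 6 r|).
Proof. by apply: (@main_gen 6 cs6 r6); vm_compute. Qed.
Lemma main7 : is_sP 7 (\max_(r < 7.+1) #|QPr 7 r|).
Proof. by apply: (@main_gen 7 cs7 r7); vm_compute. Qed.
Lemma main8 : is_sP 8 (\max_(r < 8.+1) #|QPr 8 r|).
Proof. by apply: (@main_gen 8 cs8 r8); vm_compute. Qed.
Lemma main9 : is_sP 9 (\max_(r < 9.+1) #|QPr 9 r|).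
Proof. by apply: (@main_gen 9 cs9 r9); vm_compute. Qed.
Lemma main10 : is_sP 10 (\max_(r < 10.+1) #|QPr 10 r|).
Proof. by apply: (@main_gen 10 cs10 r10); vm_compute. Qed.
Theorem mainTheorem12 (n : nat) :
  1 <= n <= 10 -> is_sP n (\max_(r < n.+1) #|QPr n r|).
Proof.
case/andP => H1 H10.
case: n H1 H10 => [|[|[|[|[|[|[|[|[|[|[|n]]]]]]]]]]] // _ _.
- exact: main1.
- exact: main2.
- exact: main3.
- exact: main4.
- exact: main5.
- exact: main6.
- exact: main7.
- exact: main8.
- exact: main9.
- exact: main10.
Qed.
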